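(* Let $r$ be odd with $1\le r\le n$. If $\mathbf{x}_1,\ldots,\mathbf{x}_r\in\mathbb{F}_2^n$ and both $A$ and $A+\sum_{i=1}^r\mathbf{x}_i\mathbf{x}_i^{\top}$ lie in $\mathrm{SGL}_n(\mathbb{F}_2)$, then $\mathbf{x}_i^{\top}A^{-1}\mathbf{x}_i=0$ for some $i$.
   Context: $\mathrm{SGL}_n(\mathbb{F}_2)$ is the set of invertible symmetric $n\times n$ matrices over the binary field $\mathbb{F}_2$. *)

(* Defs.v *)
From mathcomp Require Import all_boot all_algebra.
Set Implicit Arguments. Unset Strict Implicit. Unset Printing Implicit Defensive.
Import GRing.Theory.
Local Open Scope ring_scope.

Definition SGL (n : nat) (A : 'M['F_2]_n) : bool :=
  (A^T == A) && (A \in unitmx).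

(* Main.v *)
Require Import Defs.
From mathcomp Require Import all_boot all_algebra.
Import GRing.Theory Num.Theory.
Local Open Scope ring_scope.

Lemma F2_cases (a : 'F_2) : a = 0 \/ a = 1.
Proof. by case: a => -[|[|k]] Hk; [left; apply/val_inj|right; apply/val_inj|]. Qed.

Lemma F2_opp1 : (-1 : 'F_2) = 1. Proof. by apply/val_inj. Qed.

Lemma alt_sing r (N : 'M['F_2]_r) : odd r -> N^T = N -> (forall i, N i i = 0) ->
  N \notin unitmx.
Proof.
move=> odr sym dg.
pose M := \matrix_(i, j) (if N i j == 1 then (if (i < j)%N then 1 else -1) else 0 : int).
have HM : map_mx intr M = N.
  apply/matrixP => i j; rewrite !mxE.
  case: (F2_cases (N i j)) => ->; rewrite ?eqxx //.
  case: ifP => _ /=; rewrite ?rmorphN ?rmorph1 ?F2_opp1 //.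
have skew : M^T = - M.
  apply/matrixP => i j; rewrite !mxE.
  have <- : N i j = N j i by rewrite -{1}sym mxE.
  case: eqP => // e1.
  case: (ltngtP i j) => hij; rewrite ?opprK //.
  have eij : i = j by apply/val_inj.
  by move: e1; rewrite eij dg.
have d0 : \det M = 0.
  have := det_tr M; rewrite skew -scaleN1r detZ -signr_odd odr expr1 mulN1r.
  move/eqP; rewrite eq_sym -addr_eq0 -mulr2n mulrn_eq0 /=.
  by move/eqP.
by rewrite unitmxE -HM det_map_mx d0 rmorph0 unitr0.
Qed.

Theorem lemma3p4 (n r : nat) (x : 'I_r -> 'cV['F_2]_n) (A : 'M['F_2]_n) :
  odd r -> (1 <= r)%N -> (r <= n)%N ->
  SGL A -> SGL (A + \sum_(i < r) x i *m (x i)^T) ->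
  exists i : 'I_r, ((x i)^T *m invmx A *m x i) 0 0 = 0.
Proof.
move=> odr _ _ /andP [/eqP symA uA] /andP [_ uC].
case: (boolP [exists i, ((x i)^T *m invmx A *m x i) 0 0 == 0]) =>
  [/existsP [i /eqP] | /existsPn H]; first by exists i.
exfalso.
pose X : 'M['F_2]_(r, n) := \matrix_(i, j) x i j 0.
have hS : \sum_(i < r) x i *m (x i)^T = X^T *m X.
  apply/matrixP => a b; rewrite !mxE summxE; apply: eq_bigr => i _.
  by rewrite !mxE big_ord1 !mxE.
rewrite hS in uC.
set B := invmx A in H.
pose M := X *m B *m X^T.
pose N := 1%:M + M.
have Mii : forall i, M i i = 1.
  move=> i; case: (F2_cases (((x i)^T *m B *m x i) 0 0)) => e.
    by move: (H i); rewrite e eqxx.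
  rewrite -e !mxE.
  apply: eq_bigr => k _; rewrite !mxE; congr (_ * _); apply: eq_bigr => l _.
  by rewrite !mxE.
have symB : B^T = B by rewrite /B trmx_inv symA.
have symN : N^T = N by rewrite /N /M linearD /= trmx1 !trmx_mul trmxK symB mulmxA.
have dgN : forall i, N i i = 0.
  move=> i; have := Mii i; rewrite /N !mxE eqxx /= => ->; exact/val_inj.
have := @alt_sing _ N odr symN dgN.
rewrite -row_free_unit -kermx_eq0 => /rowV0Pn [v]; rewrite sub_kermx => /eqP vN v0.
pose u := v *m X *m B.
have BA : B *m A = 1%:M by rewrite /B mulVmx.
have e1 : u *m (A + X^T *m X) = v *m N *m X.
  rewrite /u /N /M mulmxDr -(mulmxA _ B A) BA mulmx1 mulmxDr mulmx1 mulmxDl.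
  by rewrite !mulmxA.
have u0 : u = 0.
  apply/eqP; rewrite -(mulmx_free_eq0 _ (_ : row_free (A + X^T *m X))); last by rewrite row_free_unit.
  by rewrite e1 vN mul0mx.
have vX : v *m X = u *m A by rewrite /u -mulmxA BA mulmx1.
have vM : v *m M = 0 by rewrite /M !mulmxA vX u0 !mul0mx.
by move: vN; rewrite /N mulmxDr mulmx1 vM addr0 => /eqP; rewrite (negbTE v0).
Qed.
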